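(* Let $(M,d)$ be a bounded hyperconvex metric space and let $T: M\to M$ be a mapping which diminishes the radius of invariant admissible subsets of $M$. Then $T$ has a fixed point, and the fixed point set $F(T)=\{x\in M: Tx=x\}$ (with the induced metric) is hyperconvex.
   Context: A metric space $(M,d)$ is hyperconvex if for every family of closed balls $\{B(x_i,r_i)\}_{i\in I}$ in $M$ with $d(x_i,x_j)\le r_i+r_j$ for all $i,j\in I$, one has $\bigcap_{i\in I}B(x_i,r_i)\neq\emptyset$. For $x\in M$ and $K\subseteq M$, $r_x(K)=\sup\{d(x,y):y\in K\}$. A bounded subset $K\subseteq M$ is admissible if it equals the intersection of all closed balls of $M$ containing it. $T$ diminishes the radius of invariant admissible subsets if for every admissible $A\subseteq M$ with $T(A)\subseteq A$, $r_{Tx}(T(A))\le r_x(A)$ for every $x\in M$. *)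

(* Defs.v *)
From HB Require Import structures.
From mathcomp Require Import all_boot all_order all_algebra.
From mathcomp Require Import all_classical all_reals.
Set Implicit Arguments. Unset Strict Implicit. Unset Printing Implicit Defensive.
Import Order.TTheory GRing.Theory Num.Theory.
Local Open Scope classical_set_scope.
Local Open Scope ring_scope.

Section Metric.
Variables (R : realType) (M : Type) (d : M -> M -> R).

Definition is_metric : Prop :=
  [/\ forall x y, 0 <= d x y,
      forall x y, d x y = 0 <-> x = y,
      forall x y, d x y = d y x &
      forall x y z, d x z <= d x y + d y z].

Definition cball (c : M) (r : R) : set M := [set y | d c y <= r].

Definition bounded_space : Prop := exists C : R, forall x y, d x y <= C.

Definition bounded_subset (K : set M) : Prop :=
  exists C : R, forall x y, K x -> K y -> d x y <= C.

Definition hyperconvex_on (A : set M) : Prop :=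
  forall (I : Type) (x : I -> M) (r : I -> R),
    (forall i, A (x i)) ->
    (forall i j, d (x i) (x j) <= r i + r j) ->
    exists2 z, A z & forall i, d (x i) z <= r i.

Definition hyperconvex : Prop := hyperconvex_on setT.

Definition rad (x : M) (K : set M) : R := sup [set d x y | y in K].

Definition admissible (K : set M) : Prop :=
  bounded_subset K /\
  K = [set y | forall (c : M) (r : R), 0 <= r -> K `<=` cball c r -> cball c r y].

Definition diminishes_radius (T : M -> M) : Prop :=
  forall A : set M, admissible A -> T @` A `<=` A ->
    forall x : M, rad (T x) (T @` A) <= rad x A.

Definition fixed_points (T : M -> M) : set M := [set x | T x = x].

End Metric.

(* Main.v *)
Require Import Defs.
From HB Require Import structures.
From mathcomp Require Import all_boot all_order all_algebra.
From mathcomp Require Import all_classical all_reals.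
From mathcomp Require Import lra.
Set Implicit Arguments. Unset Strict Implicit. Unset Printing Implicit Defensive.
Import Order.TTheory GRing.Theory Num.Theory.
Local Open Scope classical_set_scope.
Local Open Scope ring_scope.

Lemma ball_inter (R : realType) (M : Type) (d : M -> M -> R) (S : set M) x c1 c2 r1 r2 :
  is_metric d -> S x -> S `<=` cball d c1 r1 -> S `<=` cball d c2 r2 -> d c1 c2 <= r1 + r2.
Proof.
case=> _ _ sym tri Sx S1 S2.
have h1 := S1 _ Sx; have h2 := S2 _ Sx; rewrite /cball /= in h1 h2.
apply: le_trans (tri c1 x c2) _; rewrite (sym x c2); exact: lerD.
Qed.

Lemma adm_mem (R : realType) (M : Type) (d : M -> M -> R) (K : set M) y :
  admissible d K -> (forall c r, 0 <= r -> K `<=` cball d c r -> d c y <= r) -> K y.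
Proof. by case=> _ E H; rewrite E; exact: H. Qed.

Lemma adm_fam (R : realType) (M : Type) (d : M -> M -> R) (Fam : set (set M)) (G : set M) :
  bounded_space d -> (forall K, Fam K -> admissible d K) ->
  (forall y, G y <-> forall K, Fam K -> K y) -> admissible d G.
Proof.
move=> [C HC] FA HG; split; first by exists C.
apply/seteqP; split=> y /=.
  by move=> Gy c r r0 Gb; exact: Gb.
move=> H; apply/(proj2 (HG y)) => K FK. apply: adm_mem (FA _ FK) _ => c r r0 Kb.
apply: (H c r r0) => z Gz; exact: Kb _ (proj1 (HG z) Gz _ FK).
Qed.

Lemma ball_adm (R : realType) (M : Type) (d : M -> M -> R) c r :
  bounded_space d -> 0 <= r -> admissible d (cball d c r).
Proof.
move=> [C HC] r0; split; first by exists C.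
apply/seteqP; split=> y /=.
  by move=> Gy c' r' _ Gb; exact: Gb.
by move=> H; exact: (H c r r0).
Qed.

Lemma hc_pred (R : realType) (M : Type) (d : M -> M -> R) (Q : M * R -> Prop) :
  hyperconvex d -> (forall p q, Q p -> Q q -> d p.1 q.1 <= p.2 + q.2) ->
  exists z, forall p, Q p -> d p.1 z <= p.2.
Proof.
move=> hc HQ.
have [z _ Hz] := hc {p : M * R | Q p} (fun p => (proj1_sig p).1) (fun p => (proj1_sig p).2)
  (fun _ => I) (fun i j => HQ _ _ (proj2_sig i) (proj2_sig j)).
by exists z => p Qp; exact: (Hz (exist _ p Qp)).
Qed.

Lemma fixed_in (R : realType) (M : Type) (d : M -> M -> R) (T : M -> M) (A0 : set M) x0 :
  is_metric d -> bounded_space d -> hyperconvex d -> diminishes_radius d T ->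
  admissible d A0 -> A0 x0 -> T @` A0 `<=` A0 -> exists2 z, A0 z & T z = z.
Proof.
move=> met bnd hc dim A0adm A0x0 A0inv.
have [d0 deq dsym dtri] := met.
have [Cb HCb] := bnd.
pose P K := [/\ K `<=` A0, K !=set0, admissible d K & T @` K `<=` K].
have [K [PK Kmin]] : exists K, P K /\ forall K', P K' -> K' `<=` K -> K `<=` K'.
  have [|B [PB Bmax]] := @Zorn_bigcup M (fun B => P (A0 `&` ~` B)).
  - move=> F FP Ftot.
    pose Q (p : M * R) := 0 <= p.2 /\ (A0 `<=` cball d p.1 p.2 \/
                   exists2 X, F X & (A0 `&` ~` X) `<=` cball d p.1 p.2).
    have common : forall p q, Q p -> Q q -> d p.1 q.1 <= p.2 + q.2.
      move=> p q [_ Hp] [_ Hq].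
      case: Hp => [Hp|[X FX Hp]]; case: Hq => [Hq|[Y FY Hq]].
      + exact: ball_inter met A0x0 Hp Hq.
      + have [_ [y Hy] _ _] := FP Y FY.
        by apply: ball_inter met Hy (subset_trans _ Hp) Hq => z [].
      + have [_ [y Hy] _ _] := FP X FX.
        by apply: ball_inter met Hy Hp (subset_trans _ Hq) => z [].
      + have [XY|YX] := Ftot X Y FX FY.
        * have [_ [y Hy] _ _] := FP Y FY.
          apply: ball_inter met Hy (subset_trans _ Hp) Hq.
          by move=> z [Az nYz]; split=> // Xz; apply: nYz; exact: XY.
        * have [_ [y Hy] _ _] := FP X FX.
          apply: ball_inter met Hy Hp (subset_trans _ Hq).
          by move=> z [Az nXz]; split=> // Yz; apply: nXz; exact: YX.
    split.
    + by move=> z [].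
    + have [z Hz] := hc_pred hc common.
      exists z; split.
        apply: adm_mem A0adm _ => c r r0 Hb.
        exact: (Hz (c, r) (conj r0 (or_introl Hb))).
      move=> [X FX Xz].
      have [_ _ XA _] := FP X FX.
      have : (A0 `&` ~` X) z.
        apply: adm_mem XA _ => c r r0 Hb.
        exact: (Hz (c, r) (conj r0 (or_intror (ex_intro2 _ _ X FX Hb)))).
      by case.
    + apply: (@adm_fam _ _ d (fun K => K = A0 \/ exists2 X, F X & K = A0 `&` ~` X)) => //.
        move=> K [->|[X FX ->]] //; by have [] := FP X FX.
      move=> y; split.
        move=> [Ay nUy] K [->|[X FX ->]] //; split=> // Xy; apply: nUy; by exists X.
      move=> H; split; first exact: H (or_introl erefl).
      move=> [X FX Xy].
      have [_ nXy] := H _ (or_intror (ex_intro2 _ _ X FX erefl)); exact: nXy.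
    + move=> _ [g [Ag nUg] <-]; split; first exact: A0inv (imageP _ Ag).
      move=> [X FX XTg].
      have [_ _ _ Xinv] := FP X FX.
      have [_ ] := Xinv (T g) (imageP _ (conj Ag (fun Xg => nUg (ex_intro2 _ _ X FX Xg)))).
      exact.
  - exists (A0 `&` ~` B); split => // K' PK' K'K.
    have [K'A0 _ _ _] := PK'.
    move=> y Ky; apply: contrapT => nK'y.
    have BK' : B `<` ~` K'.
      split.
        move=> z Bz K'z; have [_] := K'K z K'z; exact.
      move=> H; have [_ nBy] := Ky; apply: nBy; exact: H nK'y.
    apply: (Bmax _ BK'); rewrite setCK setIidr //.
have [KA0 [k0 Kk0] Kadm Kinv] := PK.
pose cov := [set y | forall c r, 0 <= r -> T @` K `<=` cball d c r -> cball d c r y].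
have covK : cov `<=` K.
  move=> y covy; apply: adm_mem Kadm _ => c r r0 Kb.
  exact: covy c r r0 (subset_trans Kinv Kb).
have TKcov : T @` K `<=` cov by move=> y TKy c r _ Hb; exact: Hb.
have Kcov : K `<=` cov.
  apply: Kmin => //; split.
  - exact: subset_trans covK KA0.
  - by exists (T k0); apply: TKcov; exact: imageP.
  - apply: (@adm_fam _ _ d (fun B => exists c r, [/\ 0 <= r, T @` K `<=` cball d c r & B = cball d c r])) => //.
      by move=> B [c [r [r0 _ ->]]]; exact: ball_adm.
    move=> y; split.
      by move=> covy B [c [r [r0 Hb ->]]]; exact: covy.
    by move=> H c r r0 Hb; apply: H; exists c, r.
  - move=> _ [y covy <-]; apply: TKcov; apply: imageP; exact: covK.
pose E := [set r | exists x y, [/\ K x, K y & r = d x y]].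
have hasE : has_sup E.
  split; first by exists (d k0 k0), k0, k0.
  by exists Cb => r [x [y [_ _ ->]]].
pose del := sup E.
have dle : forall x y, K x -> K y -> d x y <= del.
  by move=> x y Kx Ky; apply: sup_upper_bound hasE _ _; exists x, y.
have dkk : d k0 k0 = 0 by apply/deq.
have del0 : 0 <= del by rewrite -dkk; exact: dle.
have del20 : 0 <= del / 2 by rewrite divr_ge0.
pose C := [set y | K y /\ forall y', K y' -> d y' y <= del / 2].
have PC : P C.
  split.
  - by move=> y [Ky _]; exact: KA0.
  - pose Q (p : M * R) := (0 <= p.2 /\ K `<=` cball d p.1 p.2) \/ (K p.1 /\ p.2 = del / 2).
    have common : forall p q, Q p -> Q q -> d p.1 q.1 <= p.2 + q.2.
      move=> [c r] [c' r']; rewrite /Q /=.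
      case=> [[r0 Kb]|[Kc ->]]; case=> [[r0' Kb']|[Kc' ->]].
      + exact: ball_inter met Kk0 Kb Kb'.
      + by apply: le_trans (Kb c' Kc') _; rewrite lerDl.
      + rewrite dsym; apply: le_trans (Kb' c Kc) _; rewrite lerDr //.
      + apply: le_trans (dle _ _ Kc Kc') _; rewrite -splitr //.
    have [z Hz] := hc_pred hc common.
    exists z; split.
      apply: adm_mem Kadm _ => c r r0 Hb.
      exact: (Hz (c, r) (or_introl (conj r0 Hb))).
    move=> y' Ky'; exact: (Hz (y', del / 2) (or_intror (conj Ky' erefl))).
  - apply: (@adm_fam _ _ d (fun B => B = K \/ exists2 y', K y' & B = cball d y' (del / 2))) => //.
      by move=> B [->|[y' _ ->]] //; exact: ball_adm.
    move=> y; split.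
      by move=> [Ky Hy] B [->|[y' Ky' ->]] //; exact: Hy.
    move=> H; split; first exact: H (or_introl erefl).
    move=> y' Ky'; exact: H (or_intror (ex_intro2 _ _ y' Ky' erefl)).
  - move=> _ [x [Kx Cx] <-]; split; first exact: Kinv (imageP _ Kx).
    move=> y' Ky'; rewrite dsym.
    apply: (Kcov y' Ky' (T x) (del / 2) del20).
    move=> _ [w Kw <-]; rewrite /cball /=.
    have hs : has_sup [set d (T x) y | y in T @` K].
      split; first by exists (d (T x) (T x)); exists (T x) => //; exact: imageP.
      by exists Cb => r [y _ <-].
    have h1 : d (T x) (T w) <= sup [set d (T x) y | y in T @` K].
      apply: (sup_upper_bound hs).
      by exists (T w) => //; exact: imageP.
    apply: le_trans h1 _.
    apply: le_trans (dim K Kadm Kinv x) _.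
    apply: ge_sup; first by exists (d x k0); exists k0.
    by move=> _ [y Ky <-]; rewrite dsym; exact: Cx.
have KC : K `<=` C by apply: Kmin => // y [].
have dle2 : forall x y, K x -> K y -> d x y <= del / 2.
  by move=> x y Kx Ky; have [_] := KC y Ky; exact.
have delle : del <= del / 2.
  apply: ge_sup; first by exists (d k0 k0), k0, k0.
  by move=> r [x [y [Kx Ky ->]]]; exact: dle2.
have Tk0 : K (T k0) by exact: Kinv (imageP _ Kk0).
exists k0; first exact: KA0.
apply/deq; apply/eqP; rewrite eq_le d0 andbT.
apply: le_trans (dle _ _ Tk0 Kk0) _.
move: delle; rewrite ler_pdivlMr // => h; lra.
Qed.

Theorem theorem2p1 (R : realType) (M : Type) (d : M -> M -> R) (T : M -> M) :
  is_metric d -> bounded_space d -> hyperconvex d ->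
  diminishes_radius d T ->
  (exists x : M, T x = x) /\ hyperconvex_on d (fixed_points T).
Proof.
move=> met bnd hc dim.
have [d0 deq dsym dtri] := met.
have [Cb HCb] := bnd.
have [x0 _ _] := hc Empty_set (fun e => match e with end) (fun e => match e with end)
  (fun e => match e with end) (fun e => match e with end).
have Madm : admissible d setT.
  split; first by exists Cb.
  by apply/seteqP; split => y // _ c r _ H; exact: H.
split.
  have [z _ Tz] := fixed_in met bnd hc dim Madm (I : setT x0) (@subsetT _ _).
  by exists z.
move=> I x r Fx Hr.
have r0 : forall i, 0 <= r i.
  move=> i; have := Hr i i; have -> : d (x i) (x i) = 0 by apply/deq.
  move=> h; lra.
have ne : forall i y, d (x i) (T y) <= d (x i) y.
  move=> i y.
  have sadm : admissible d [set x i].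
    split; first by exists Cb.
    apply/seteqP; split => z /=.
      by move=> -> c r' _ H; exact: H.
    move=> H; apply/deq; apply/eqP; rewrite eq_le d0 andbT.
    rewrite dsym; apply: (H (x i) 0 (lexx _)) => w /= ->.
    by rewrite /cball /= (proj2 (deq _ _) erefl).
  have sinv : T @` [set x i] `<=` [set x i].
    by move=> _ [z /= -> <-]; exact: Fx.
  have := dim _ sadm sinv y.
  rewrite /Defs.rad (image_set1 T (x i)) Fx. rewrite (image_set1 (d (T y)) (x i)).  rewrite (image_set1 (d y) (x i)) !sup1 => h.
  by rewrite dsym (dsym (x i) y).
pose D := [set y | forall i, d (x i) y <= r i].
have [z0 _ Hz0] := hc I x r (fun _ => Logic.I) Hr.
have Dadm : admissible d D.
  apply: (@adm_fam _ _ d (fun B => exists i, B = cball d (x i) (r i))) => //.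
    by move=> B [i ->]; exact: ball_adm.
  move=> y; split.
    by move=> Dy B [i ->]; exact: Dy.
  by move=> H i; apply: (H (cball d (x i) (r i))); exists i.
have Dinv : T @` D `<=` D.
  by move=> _ [y Dy <-] i; exact: le_trans (ne i y) (Dy i).
have [z Dz Tz] := fixed_in met bnd hc dim Dadm (Hz0 : D z0) Dinv.
by exists z.
Qed.
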